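(* Let $1\le k\le n$, $\sigma\in\mathcal D^\Delta_k$, $\tilde\sigma=\overline\psi_{n,k}(\sigma)=\tilde\sigma_1\cdots\tilde\sigma_k$, and let $\gamma$ be the increasing word $(s(\sigma)+1)(s(\sigma)+2)\cdots(n-e(\sigma))$. Then $\overline\psi_{n,n}$ restricts to a bijection from $\Delta^<_n(\sigma)=\{\pi\in B_n: dp(\pi)=\sigma,\ 0<\pi_n<n\}$ onto the set of shuffles $\alpha$ of $\tilde\sigma$ and $\gamma$ whose last letter is $\tilde\sigma_k$, and $\mathrm{fmaj}(\pi)=\mathrm{fmaj}(\overline\psi_{n,n}(\pi))$ for every $\pi\in\Delta^<_n(\sigma)$.
   Context: $B_n$ is the set of words $\pi=\pi_1\cdots\pi_n$ with $\pi_i\in\{\pm1,\dots,\pm n\}$ and $|\pi_1|\cdots|\pi_n|$ a permutation of $[n]$; $\mathcal D^\Delta_k$ is the set of $\sigma\in B_k$ with $\sigma_k>0$ and $\sigma_i\ne i$ for all $i$. For a word of nonzero integers with distinct absolute values $a_1<\dots<a_m$, its reduction replaces each letter $\pm a_j$ by $\pm j$; $dp(\pi)$ is the reduction of the subword of letters $\pi_i$ with $\pi_i\ne i$. For $\sigma\in B_k$, the letter $\sigma_j$ is a subcedant if $\sigma_j<j$, an excedant if $\sigma_j>j$, a fixed point if $\sigma_j=j$; $s(\sigma)$, $e(\sigma)$ are the numbers of subcedants and excedants. For $k\le n$, $\overline\psi_{n,k}(\sigma)$ is obtained from $\sigma$ by replacing the $i$-th smallest in absolute value subcedant $\sigma_j$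 by $\mathrm{sgn}(\sigma_j)\,i$ ($1\le i\le s(\sigma)$), the $i$-th smallest fixed point by $s(\sigma)+i$, and the $i$-th largest excedant by $n-i+1$ ($1\le i\le e(\sigma)$). A shuffle of two words with disjoint sets of letters is a word containing both as subsequences and consisting of exactly their letters. Order $\prec$: $-1\prec-2\prec\cdots\prec-N\prec1\prec\cdots\prec N$; $\mathrm{maj}_\prec(w)=\sum_{i:w_i\succ w_{i+1}}i$; $\mathrm{fmaj}(w)=2\mathrm{maj}_\prec(w)+\mathrm{neg}(w)$ with $\mathrm{neg}(w)$ the number of negative letters. *)

(* Defs.v *)
From mathcomp Require Import all_boot all_order all_algebra.
Set Implicit Arguments. Unset Strict Implicit. Unset Printing Implicit Defensive.
Import Order.TTheory GRing.Theory Num.Theory.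
Local Open Scope ring_scope.

(* Words are sequences of integers; positions are 1-based. *)

(* w is in B_n: |w_1| ... |w_n| is a permutation of [n] (so no letter is 0). *)
Definition signed_perm (n : nat) (w : seq int) : bool :=
  perm_eq [seq absz x | x <- w] (iota 1 n).

Definition letter (w : seq int) (i : nat) : int := nth 0 w i.-1.

Definition posw (w : seq int) : seq (int * nat) := zip w (iota 1 (size w)).

Definition DDelta (k : nat) (s : seq int) : bool :=
  [&& signed_perm k s, 0 < letter s k & all (fun p => p.1 != p.2%:Z) (posw s)].

(* reduction of a word with distinct absolute values *)
Definition red (w : seq int) : seq int :=
  [seq sgz x * (count (fun y => (absz y <= absz x)%N) w)%:Z | x <- w].

Definition dp (w : seq int) : seq int :=
  red [seq p.1 | p <- posw w & p.1 != p.2%:Z].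

Definition subc (w : seq int) : seq int := [seq p.1 | p <- posw w & p.1 < p.2%:Z].
Definition fixp (w : seq int) : seq int := [seq p.1 | p <- posw w & p.1 == p.2%:Z].
Definition exc  (w : seq int) : seq int := [seq p.1 | p <- posw w & p.2%:Z < p.1].

Definition s_num (w : seq int) : nat := size (subc w).
Definition e_num (w : seq int) : nat := size (exc w).

(* overline{psi}_{n,k} (k is the length of the word) *)
Definition psibar (n : nat) (w : seq int) : seq int :=
  [seq (let x := p.1 in let j := p.2 in
        if x < j%:Z then
          sgz x * (count (fun y => (absz y <= absz x)%N) (subc w))%:Z
        else if x == j%:Z then
          (s_num w + count (fun y => y <= x) (fixp w))%:Z
        else
          n.+1%:Z - (count (fun y => x <= y) (exc w))%:Z)
  | p <- posw w].

Definition shuffle (u v alpha : seq int) : bool :=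
  [&& subseq u alpha, subseq v alpha & perm_eq alpha (u ++ v)].

Definition prec (x y : int) : bool :=
  if x < 0 then (if y < 0 then (absz x < absz y)%N else true)
  else (if y < 0 then false else x < y).

Definition maj_prec (w : seq int) : nat :=
  \sum_(1 <= i < size w | prec (letter w i.+1) (letter w i)) i.

Definition neg (w : seq int) : nat := count (fun x => x < 0) w.

Definition fmaj (w : seq int) : nat := 2 * maj_prec w + neg w.

Definition Delta_lt (n : nat) (sigma : seq int) (pi : seq int) : bool :=
  [&& signed_perm n pi, dp pi == sigma, 0 < letter pi n & letter pi n < n%:Z].

Definition gamma_word (n : nat) (sigma : seq int) : seq int :=
  [seq i%:Z | i <- iota (s_num sigma).+1 (n - e_num sigma - s_num sigma)].

(* Main.v *)
Require Import Defs.
From mathcomp Require Import all_boot all_order all_algebra zify.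
Import Order.TTheory GRing.Theory Num.Theory.
Local Open Scope ring_scope.
Set Implicit Arguments. Unset Strict Implicit.


Definition subcL (L : seq (int * nat)) : seq int := [seq p.1 | p <- L & p.1 < p.2%:Z].
Definition fixpL (L : seq (int * nat)) : seq int := [seq p.1 | p <- L & p.1 == p.2%:Z].
Definition excL (L : seq (int * nat)) : seq int := [seq p.1 | p <- L & p.2%:Z < p.1].
Definition cS L (x : int) : nat := count (fun y => (absz y <= absz x)%N) (subcL L).
Definition cF L (x : int) : nat := count (fun y => y <= x) (fixpL L).
Definition cE L (x : int) : nat := count (fun y => x <= y) (excL L).

Definition gL (n : nat) (L : seq (int * nat)) (p : int * nat) : int :=
  let x := p.1 in let j := p.2 in
  if x < j%:Z then sgz x * (cS L x)%:Z
  else if x == j%:Z then (size (subcL L) + cF L x)%:Z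
  else n.+1%:Z - (cE L x)%:Z.

Lemma psibarE n w : psibar n w = map (gL n (posw w)) (posw w).
Proof. by []. Qed.

Lemma size_posw w : size (posw w) = size w.
Proof. by rewrite /posw size_zip size_iota minnn. Qed.

Lemma nth_posw w i : (i < size w)%N -> nth (0, 0%N) (posw w) i = (nth 0 w i, i.+1).
Proof. by move=> hi; rewrite /posw nth_zip ?size_iota // nth_iota // add1n. Qed.

Lemma posw_mem w p : p \in posw w -> exists2 i, (i < size w)%N & p = (nth 0 w i, i.+1).
Proof.
move/(nthP (0, 0%N)) => [i]; rewrite size_posw => hi <-.
by exists i => //; rewrite nth_posw.
Qed.

Lemma unzip1_posw w : map fst (posw w) = w.
Proof. by apply: (unzip1_zip (s := w) (t := iota 1 (size w))); rewrite size_iota. Qed.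
Lemma unzip2_posw w : map snd (posw w) = iota 1 (size w).
Proof. by apply: (unzip2_zip (s := w) (t := iota 1 (size w))); rewrite size_iota. Qed.

Lemma count_lt_sub (T : eqType) (P Q : pred T) s y :
  (forall z, P z -> Q z) -> y \in s -> Q y -> ~~ P y -> (count P s < count Q s)%N.
Proof.
move=> PQ; elim: s => //= x s IH; rewrite in_cons => /orP [/eqP <- Qy nPy|ys Qy nPy].
  have := sub_count PQ s; rewrite Qy (negbTE nPy); lia.
have := IH ys Qy nPy; case Px: (P x); first by rewrite (PQ _ Px); lia.
case: (Q x); lia.
Qed.

Lemma size_split L : (size (subcL L) + size (fixpL L) + size (excL L))%N = size L.
Proof.
rewrite /subcL /fixpL /excL !size_map; elim: L => //= [[x j] L IH] /=.
case: (ltgtP x j%:Z) => h /=; lia.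
Qed.

Section Bounds.
Variable L : seq (int * nat).

Lemma cS_ge1 p : p \in L -> p.1 < p.2%:Z -> (1 <= cS L p.1)%N.
Proof.
move=> pL h; rewrite /cS -has_count; apply/hasP; exists p.1 => //.
by apply/mapP; exists p => //; rewrite mem_filter h.
Qed.
Lemma cS_le x : (cS L x <= size (subcL L))%N.
Proof. exact: count_size. Qed.
Lemma cF_ge1 p : p \in L -> p.1 = p.2%:Z -> (1 <= cF L p.1)%N.
Proof.
move=> pL h; rewrite /cF -has_count; apply/hasP; exists p.1 => //.
by apply/mapP; exists p => //; rewrite mem_filter h eqxx.
Qed.
Lemma cF_le x : (cF L x <= size (fixpL L))%N.
Proof. exact: count_size. Qed.
Lemma cE_ge1 p : p \in L -> p.2%:Z < p.1 -> (1 <= cE L p.1)%N.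
Proof.
move=> pL h; rewrite /cE -has_count; apply/hasP; exists p.1 => //.
by apply/mapP; exists p => //; rewrite mem_filter h.
Qed.
Lemma cE_le x : (cE L x <= size (excL L))%N.
Proof. exact: count_size. Qed.

Lemma cS_mono x y : y \in subcL L -> (absz x < absz y)%N -> (cS L x < cS L y)%N.
Proof.
move=> yS h; apply: (@count_lt_sub _ _ _ _ y) => // [z|]; first lia.
by rewrite -ltnNge.
Qed.
Lemma cF_mono x y : y \in fixpL L -> x < y -> (cF L x < cF L y)%N.
Proof.
move=> yS h; apply: (@count_lt_sub _ _ _ _ y) => // [z|]; first lia.
by rewrite -ltNge.
Qed.
Lemma cE_mono x y : x \in excL L -> x < y -> (cE L y < cE L x)%N.
Proof.
move=> yS h; apply: (@count_lt_sub _ _ _ _ x) => // [z|]; first lia.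
by rewrite -ltNge.
Qed.

Lemma in_subcL p : p \in L -> p.1 < p.2%:Z -> p.1 \in subcL L.
Proof. by move=> pL h; apply/mapP; exists p => //; rewrite mem_filter h. Qed.
Lemma in_fixpL p : p \in L -> p.1 = p.2%:Z -> p.1 \in fixpL L.
Proof. by move=> pL h; apply/mapP; exists p => //; rewrite mem_filter h eqxx. Qed.
Lemma in_excL p : p \in L -> p.2%:Z < p.1 -> p.1 \in excL L.
Proof. by move=> pL h; apply/mapP; exists p => //; rewrite mem_filter h. Qed.
End Bounds.


Lemma sp_size n w : signed_perm n w -> size w = n.
Proof. by move/perm_size; rewrite size_map size_iota. Qed.
Lemma sp_abs n w x : signed_perm n w -> x \in w -> (1 <= absz x <= n)%N.
Proof.
move=> sp xw; have: absz x \in iota 1 n by rewrite -(perm_mem sp); apply: map_f.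
rewrite mem_iota; lia.
Qed.
Lemma sp_uniq n w : signed_perm n w -> uniq (map absz w).
Proof. by move/perm_uniq->; exact: iota_uniq. Qed.

Lemma precE x y : prec x y = ((x < 0) && ((y < 0) ==> (y < x))) || ((0 <= x) && (0 <= y) && (x < y)).
Proof. rewrite /prec; case: (ltrP x 0); case: (ltrP y 0) => *; lia. Qed.

Lemma adj_prec n w i : signed_perm n w -> (1 <= i)%N -> (i < n)%N ->
  prec (gL n (posw w) (letter w i.+1, i.+1)) (gL n (posw w) (letter w i, i))
  = prec (letter w i.+1) (letter w i).
Proof.
move=> sp i1 iN; have sz := sp_size sp.
set L := posw w; set a := letter w i; set b := letter w i.+1.
have aL : (a, i) \in L.
  have -> : (a, i) = nth (0,0%N) (posw w) i.-1 by rewrite nth_posw ?prednK //; lia.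
  by rewrite mem_nth // size_posw; lia.
have bL : (b, i.+1) \in L.
  have -> : (b, i.+1) = nth (0,0%N) (posw w) i by rewrite nth_posw //; lia.
  by rewrite mem_nth // size_posw; lia.
have aw : a \in w by rewrite /a /letter mem_nth // sz; move: i1 iN; case: (i) => //= j; lia.
have bw : b \in w by rewrite /b /letter /= mem_nth // sz.
have ha := sp_abs sp aw; have hb := sp_abs sp bw.
have hab : absz a != absz b.
  have h1 : (i.-1 < size (map absz w))%N.
    by rewrite size_map sz; move: i1 iN; case: (i) => //= j; lia.
  have h2 : (i < size (map absz w))%N by rewrite size_map sz.
  move: (nth_uniq 0%N h1 h2 (sp_uniq sp)); rewrite size_map in h1 h2.
  rewrite !(nth_map 0) // /a /b /letter /= => ->.
  by case: (i) i1 => // j _ /=; rewrite ltn_eqF.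
have hsz := size_split L; rewrite size_posw sz in hsz.
have bS := cS_le L; have bF := cF_le L; have bE := cE_le L.
have ha0 : a != 0 by apply/eqP => a0; move: ha; rewrite a0.
have hb0 : b != 0 by apply/eqP => b0; move: hb; rewrite b0.
rewrite /gL /=.
case: (ltgtP a i%:Z) => ha'; case: (ltgtP b i.+1%:Z) => hb'.
- have := cS_ge1 aL ha'; have := cS_ge1 bL hb'.
  have := cS_mono (x := a) (in_subcL bL hb'); have := cS_mono (x := b) (in_subcL aL ha').
  have := bS a; have := bS b.
  rewrite !precE /=; move: (cS L a) (cS L b) => *; apply/idP/idP; lia.
- have := cS_ge1 aL ha'; have := cE_ge1 bL hb'.
  have := bS a; have := bE b.
  rewrite !precE /=; move: (cS L a) (cE L b) => *; apply/idP/idP; lia.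
- have := cS_ge1 aL ha'; have := cF_ge1 bL hb'.
  have := bS a; have := bF b.
  rewrite !precE /=; move: (cS L a) (cF L b) => *; apply/idP/idP; lia.
- have := cE_ge1 aL ha'; have := cS_ge1 bL hb'.
  have := bE a; have := bS b.
  rewrite !precE /=; move: (cE L a) (cS L b) => *; apply/idP/idP; lia.
- have := cE_ge1 aL ha'; have := cE_ge1 bL hb'.
  have := cE_mono (y := b) (in_excL aL ha'); have := cE_mono (y := a) (in_excL bL hb').
  have := bE a; have := bE b.
  rewrite !precE /=; move: (cE L a) (cE L b) => *; apply/idP/idP; lia.
- have := cE_ge1 aL ha'; have := cF_ge1 bL hb'.
  have := bE a; have := bF b.
  rewrite !precE /=; move: (cE L a) (cF L b) => *; apply/idP/idP; lia.
- have := cF_ge1 aL ha'; have := cS_ge1 bL hb'.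
  have := bF a; have := bS b.
  rewrite !precE /=; move: (cF L a) (cS L b) => *; apply/idP/idP; lia.
- have := cF_ge1 aL ha'; have := cE_ge1 bL hb'.
  have := bF a; have := bE b.
  rewrite !precE /=; move: (cF L a) (cE L b) => *; apply/idP/idP; lia.
- have := cF_ge1 aL ha'; have := cF_ge1 bL hb'.
  have : (cF L a < cF L b)%N by apply: cF_mono; [exact: (in_fixpL bL hb') | lia].
  have := bF a; have := bF b.
  rewrite !precE /=; move: (cF L a) (cF L b) => *; apply/idP/idP; lia.
Qed.

Lemma letter_psibar n w i : (1 <= i <= size w)%N ->
  letter (psibar n w) i = gL n (posw w) (letter w i, i).
Proof.
case: i => // j /= hj; rewrite psibarE /letter /= (nth_map (0,0%N)) ?size_posw //.
by rewrite nth_posw.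
Qed.

Lemma fmaj_psibar n w : signed_perm n w -> fmaj (psibar n w) = fmaj w.
Proof.
move=> sp; have sz := sp_size sp.
have szp : size (psibar n w) = size w by rewrite psibarE size_map size_posw.
rewrite /fmaj; congr (2 * _ + _)%N.
  rewrite /maj_prec szp big_nat_cond [RHS]big_nat_cond; apply: eq_bigl => i.
  rewrite ?andbT; case: (boolP ((1 <= i < size w)%N)) => //= hi.
  rewrite !letter_psibar; try (apply/andP; split; lia).
  apply: adj_prec; lia.
rewrite /neg psibarE count_map -[in RHS](unzip1_posw w) count_map.
apply: eq_in_count => -[x jj] pL /=.
have hsz := size_split (posw w); rewrite size_posw sz in hsz.
have b1 := cS_ge1 pL; have b2 := cF_ge1 pL; have b3 := cE_ge1 pL.
have := cS_le (posw w) x; have := cF_le (posw w) x; have := cE_le (posw w) x.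
case: (posw_mem pL) => j hj [pE _].
have ha : (1 <= absz x)%N by have := sp_abs sp (mem_nth 0 hj); rewrite pE /=; case/andP.
move: b1 b2 b3 ha; rewrite /gL /=.
move: (cS _ _) (cF _ _) (cE _ _) => c1 c2 c3 *.
case: (ltgtP x jj%:Z) => h; apply/idP/idP; lia.
Qed.


Definition cnt (s : seq nat) (t : nat) : nat := count (fun j => (j <= t)%N) s.

Lemma cnt_ge1 s t : t \in s -> (1 <= cnt s t)%N.
Proof. by move=> ts; rewrite /cnt -has_count; apply/hasP; exists t. Qed.

Lemma cnt_le s t1 t2 : t1 \in s -> (cnt s t1 <= cnt s t2)%N = (t1 <= t2)%N.
Proof.
move=> t1s; case: (leqP t1 t2) => h.
  by apply: sub_count => j /= hj; apply: leq_trans h.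
apply: negbTE; rewrite -ltnNge; apply: (@count_lt_sub _ _ _ _ t1) => //= [j hj|].
  exact: leq_trans (ltnW h).
by rewrite -ltnNge.
Qed.

Lemma cnt_lt s t1 t2 : t2 \in s -> (cnt s t1 < cnt s t2)%N = (t1 < t2)%N.
Proof. by move=> h; rewrite !ltnNge cnt_le. Qed.

Lemma cnt_eq s t1 t2 : t1 \in s -> t2 \in s -> (cnt s t1 == cnt s t2) = (t1 == t2).
Proof. by move=> h1 h2; rewrite !eqn_leq !cnt_le. Qed.

Lemma cnt_sorted s : sorted ltn s -> map (cnt s) s = iota 1 (size s).
Proof.
elim: s => //= x s IH hs.
have hs' : sorted ltn s := path_sorted hs.
have allgt : all (fun y => x < y)%N s := order_path_min ltn_trans hs.
rewrite /cnt /= leqnn add1n.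
have -> : count (fun j => (j <= x)%N) s = 0%N.
  apply/eqP; rewrite -leqn0 leqNgt -has_count; apply/hasP => -[y ys /= yx].
  by move/allP: allgt => /(_ y ys); rewrite ltnNge yx.
congr (_ :: _); rewrite -[2%N]/(1 + 1)%N iotaDl -IH // -map_comp.
apply/eq_in_map => y ys /=.
by move/allP: allgt => /(_ y ys) /ltnW ->.
Qed.

Definition nfx (q : int * nat) : bool := q.1 != q.2%:Z.

Lemma filter_sub (T : Type) (p a : pred T) s :
  (forall x, p x -> a x) -> filter p (filter a s) = filter p s.
Proof.
move=> pa; rewrite -filter_predI; apply: eq_filter => x /=.
by case px: (p x) => //=; rewrite pa.
Qed.

Section Core.
Variables (n : nat) (pi : seq int).
Hypothesis sp : signed_perm n pi.
Local Notation L := (posw pi).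
Local Notation P := (filter nfx (posw pi)).
Local Notation Q := (filter (predC nfx) (posw pi)).
Local Notation u := (map fst P).
Definition phi t := cnt (map snd P) t.
Definition hv (x : int) : int := sgz x * (phi (absz x))%:Z.
Definition hq (q : int * nat) := (hv q.1, phi q.2).

Lemma sz_pi : size pi = n.
Proof. exact: sp_size sp. Qed.

Lemma L_sorted : sorted ltn (map snd L).
Proof. by rewrite unzip2_posw; exact: iota_ltn_sorted. Qed.
Lemma P_sorted : sorted ltn (map snd P).
Proof. exact: subseq_sorted ltn_trans _ _ (map_subseq _ (filter_subseq _ _)) L_sorted. Qed.
Lemma Q_sorted : sorted ltn (map snd Q).
Proof. exact: subseq_sorted ltn_trans _ _ (map_subseq _ (filter_subseq _ _)) L_sorted. Qed.

Lemma Q_fixed q : q \in Q -> q.1 = q.2%:Z.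
Proof. by rewrite mem_filter /= /nfx negbK => /andP [/eqP]. Qed.

Lemma F1 : perm_eq (map absz u) (map snd P).
Proof.
rewrite -(perm_cat2r (map snd Q)).
have e1 : map (fun q => absz q.1) Q = map snd Q by apply/eq_in_map => q /Q_fixed ->.
have e2 : map absz u = map (fun q => absz q.1) P by rewrite -map_comp.
rewrite e2 -{1}e1 -!map_cat.
have h1 := perm_filterC nfx L.
apply: (@perm_trans _ (map (fun q => absz q.1) L)); first by apply: perm_map; rewrite h1.
apply: (@perm_trans _ (map snd L)); last by apply: perm_map; rewrite perm_sym h1.
rewrite unzip2_posw sz_pi.
have -> : map (fun q => absz q.1) L = map absz pi by rewrite -{2}(unzip1_posw pi) -map_comp.
exact: sp.
Qed.

Lemma phiE t : count (fun y => (absz y <= t)%N) u = phi t.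
Proof. rewrite /phi /cnt; transitivity (count (fun j => (j <= t)%N) (map absz u)); first by rewrite [RHS]count_map. exact: (elimT permP F1). Qed.

Lemma P_L q : q \in P -> q \in L.
Proof. by rewrite mem_filter => /andP []. Qed.

Lemma P_snd q : q \in P -> q.2 \in map snd P.
Proof. by move=> h; apply: map_f. Qed.
Lemma P_abs q : q \in P -> absz q.1 \in map snd P.
Proof. by move=> h; rewrite -(perm_mem F1); apply: map_f; apply: map_f. Qed.
Lemma P_nz q : q \in P -> (1 <= absz q.1)%N.
Proof.
move/P_L/posw_mem => [i hi ->] /=.
by have /andP [] := sp_abs sp (mem_nth 0 hi).
Qed.
Lemma L_pos q : q \in L -> (1 <= q.2)%N.
Proof. by move/posw_mem => [i hi ->]. Qed.
Lemma P_nfx q : q \in P -> q.1 != q.2%:Z.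
Proof. by rewrite mem_filter => /andP []. Qed.

Lemma hv_abs x : (1 <= absz x)%N -> absz x \in map snd P -> absz (hv x) = phi (absz x).
Proof.
move=> h1 h2; have := cnt_ge1 h2; rewrite /hv -/(phi _).
move: (phi _) => c hc; lia.
Qed.
Lemma hv_sgz x : (1 <= absz x)%N -> absz x \in map snd P -> sgz (hv x) = sgz x.
Proof.
move=> h1 h2; have := cnt_ge1 h2; rewrite /hv -/(phi _).
move: (phi _) => c hc; lia.
Qed.

Lemma types q : q \in P ->
  [/\ (hv q.1 < (phi q.2)%:Z) = (q.1 < q.2%:Z),
      (hv q.1 == (phi q.2)%:Z) = false &
      ((phi q.2)%:Z < hv q.1) = (q.2%:Z < q.1)].
Proof.
move=> qP; have h1 := P_abs qP; have h2 := P_snd qP; have h3 := P_nz qP.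
have h4 := P_nfx qP; have h5 := L_pos (P_L qP).
have c1 := cnt_ge1 h1; have c2 := cnt_ge1 h2.
have l1 := cnt_lt (absz q.1) h2.
have l2 := cnt_lt q.2 h1.
have l3 := cnt_eq h1 h2.
rewrite /hv /phi; move: (cnt _ _) (cnt _ _) c1 c2 l1 l2 l3 => c d c1 c2 l1 l2 l3.
move: q.1 q.2 h3 h4 h5 l1 l2 l3 => x j h3 h4 h5 l1 l2 l3.
split; apply/idP/idP; lia.
Qed.

Lemma subcL_P : subcL L = subcL P.
Proof.
rewrite /subcL filter_sub // => q /= h; rewrite /nfx; lia.
Qed.
Lemma excL_P : excL L = excL P.
Proof.
rewrite /excL filter_sub // => q /= h; rewrite /nfx; lia.
Qed.

Lemma subcP_mem y : y \in subcL P -> exists2 q, q \in P & (q.1 = y /\ q.1 < q.2%:Z).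
Proof. by move/mapP => [q]; rewrite mem_filter => /andP [h qP] ->; exists q. Qed.
Lemma excP_mem y : y \in excL P -> exists2 q, q \in P & (q.1 = y /\ q.2%:Z < q.1).
Proof. by move/mapP => [q]; rewrite mem_filter => /andP [h qP] ->; exists q. Qed.

Lemma subc_h : subcL (map hq P) = map hv (subcL P).
Proof.
rewrite /subcL filter_map -!map_comp; congr map.
by apply: eq_in_filter => q qP /=; case: (types qP).
Qed.
Lemma exc_h : excL (map hq P) = map hv (excL P).
Proof.
rewrite /excL filter_map -!map_comp; congr map.
by apply: eq_in_filter => q qP /=; case: (types qP).
Qed.

Lemma g_h q : q \in P -> gL n (map hq P) (hq q) = gL n L q.
Proof.
move=> qP; have [t1 t2 t3] := types qP.
rewrite /gL /= t1 t2 (negbTE (P_nfx qP)).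
case: ifP => hs.
  rewrite hv_sgz ?P_nz ?P_abs //; congr (_ * _%:Z).
  rewrite /cS subc_h subcL_P count_map; apply: eq_in_count => y /subcP_mem [q' q'P [<- _]] /=.
  rewrite !hv_abs ?P_nz ?P_abs // /phi cnt_le //; exact: P_abs.
congr (_ - _%:Z).
rewrite /cE exc_h excL_P count_map; apply: eq_in_count => y /excP_mem [q' q'P [<- h']] /=.
have hx : q.2%:Z < q.1 by move: hs t3; have := P_nfx qP; lia.
have p1 := L_pos (P_L qP); have p2 := L_pos (P_L q'P).
have a1 := P_abs qP; have a2 := P_abs q'P.
have := cnt_le (absz q'.1) a1; have := cnt_le (absz q.1) a2.
have := cnt_ge1 a1; have := cnt_ge1 a2.
rewrite /hv /phi; move: (cnt _ (absz q.1)) (cnt _ (absz q'.1)) => c d.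
move: q.1 q.2 q'.1 q'.2 hx h' p1 p2 => x j x' j' *.
apply/idP/idP; lia.
Qed.

Lemma posw_dp : posw (dp pi) = map hq P.
Proof.
have e : dp pi = map hv u.
  by rewrite /dp /red; apply: eq_map => x; rewrite /hv phiE.
rewrite /posw e size_map size_map.
have <- : map phi (map snd P) = iota 1 (size P).
  by rewrite (cnt_sorted P_sorted) size_map.
rewrite /hq; elim: P => //= q s IH.
by rewrite IH.
Qed.

Lemma tsig : psibar n (dp pi) = map (gL n L) P.
Proof.
rewrite psibarE posw_dp -map_comp; apply/eq_in_map => q qP /=.
exact: g_h.
Qed.

Lemma s_dp : s_num (dp pi) = size (subcL L).
Proof. by rewrite (_ : s_num _ = size (subcL (posw (dp pi)))) // posw_dp subc_h size_map subcL_P. Qed.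
Lemma e_dp : e_num (dp pi) = size (excL L).
Proof. by rewrite (_ : e_num _ = size (excL (posw (dp pi)))) // posw_dp exc_h size_map excL_P. Qed.

Lemma gam : map (gL n L) Q = gamma_word n (dp pi).
Proof.
have hsz := size_split L; rewrite size_posw sz_pi in hsz.
have fQ : fixpL L = map (fun q => q.2%:Z) Q.
  rewrite /fixpL (_ : filter _ L = Q); last by apply: eq_filter => q; rewrite /= /nfx negbK.
  by apply/eq_in_map => q /Q_fixed.
have sf : size (fixpL L) = size Q by rewrite fQ size_map.
rewrite /gamma_word s_dp e_dp.
have -> : (n - size (excL L) - size (subcL L))%N = size Q by lia.
rewrite -addn1 iotaDl.
have <- : map (cnt (map snd Q)) (map snd Q) = iota 1 (size Q).
  by rewrite (cnt_sorted Q_sorted) size_map.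
rewrite -!map_comp.
apply/eq_in_map => q qQ /=.
have qf := Q_fixed qQ.
rewrite /gL qf ltxx eqxx; congr Posz; congr addn.
by rewrite /cF fQ /cnt !count_map; apply: eq_count => j /=; rewrite lez_nat.
Qed.

End Core.


Fixpoint mrg (T : Type) (m : bitseq) (A B : seq T) : seq T :=
  if m is b :: m' then
    if b then (if A is x :: A' then x :: mrg m' A' B else [::])
    else (if B is y :: B' then y :: mrg m' A B' else [::])
  else [::].

Lemma mrg_filter (T U : Type) (a : pred T) (f : T -> U) s :
  mrg (map a s) (map f (filter a s)) (map f (filter (predC a) s)) = map f s.
Proof. by elim: s => //= x s IH; case: (a x) => /=; rewrite IH. Qed.

Lemma mrg_mask (T : Type) (m : bitseq) (s : seq T) :
  size m = size s -> mrg m (mask m s) (mask (map negb m) s) = s.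
Proof.
by elim: m s => [|b m IH] [|x s] //= [hs]; case: b => /=; rewrite IH.
Qed.

Definition szok (T : Type) (m : bitseq) (A B : seq T) :=
  size A = count id m /\ size B = count negb m.

Lemma mrg_map (T U : Type) (f : T -> U) m A B :
  map f (mrg m A B) = mrg m (map f A) (map f B).
Proof.
elim: m A B => [|b m IH] A B //=; case: b.
  by case: A => //= x A; rewrite IH.
by case: B => //= x B; rewrite IH.
Qed.

Lemma zip_mrg (T U : Type) m (A B : seq T) (A' B' : seq U) :
  szok m A B -> szok m A' B' -> zip (mrg m A B) (mrg m A' B') = mrg m (zip A A') (zip B B').
Proof.
elim: m A B A' B' => [|b m IH] A B A' B' //= [hA hB] [hA' hB']; case: b hA hB hA' hB' => /= hA hB hA' hB'.
  case: A hA => // x A [hA]; case: A' hA' => // x' A' [hA'] /=.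
  by rewrite IH.
case: B hB => // x B [hB]; case: B' hB' => // x' B' [hB'] /=.
by rewrite IH.
Qed.

Lemma size_mrg (T : Type) m (A B : seq T) : szok m A B -> size (mrg m A B) = size m.
Proof.
elim: m A B => [|b m IH] A B //= [hA hB]; case: b hA hB => /= hA hB.
  by case: A hA => // x A [hA] /=; rewrite IH.
by case: B hB => // x B [hB] /=; rewrite IH.
Qed.

Lemma filter_mrg (T : Type) (a : pred T) m A B : szok m A B -> all a A -> all (predC a) B ->
  filter a (mrg m A B) = A /\ filter (predC a) (mrg m A B) = B.
Proof.
elim: m A B => [|b m IH] A B /= [hA hB].
  by case: A hA => //; case: B hB.
case: b hA hB => /= hA hB.
  case: A hA => // x A [hA] /= /andP [ax aA] aB; rewrite ax /=.
  by have [-> ->] := IH A B (conj hA hB) aA aB.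
case: B hB => // x B [hB] /= aA /andP [ax aB]; move: ax; rewrite /= => /negbTE ->.
by have [-> ->] := IH A B (conj hA hB) aA aB.
Qed.

Lemma map_mrg_pred (T : Type) (a : pred T) m A B : szok m A B -> all a A -> all (predC a) B ->
  map a (mrg m A B) = m.
Proof.
elim: m A B => [|b m IH] A B /= [hA hB] //.
case: b hA hB => /= hA hB.
  case: A hA => // x A [hA] /= /andP [ax aA] aB; rewrite ax /=.
  by rewrite (IH A B (conj hA hB) aA aB).
case: B hB => // x B [hB] /= aA /andP [ax aB]; move: ax; rewrite /= => /negbTE ->.
by rewrite (IH A B (conj hA hB) aA aB).
Qed.

Lemma perm_mrg (T : eqType) m (A B : seq T) : szok m A B -> perm_eq (mrg m A B) (A ++ B).
Proof.
elim: m A B => [|b m IH] A B /= [hA hB].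
  by case: A hA => //; case: B hB.
case: b hA hB => /= hA hB.
  case: A hA => // x A [hA] /=; rewrite perm_cons; exact: IH.
case: B hB => // x B [hB] /=.
change (perm_eq (x :: mrg m A B) (A ++ [:: x] ++ B)); rewrite perm_sym (perm_catCA A [:: x] B) /= perm_cons perm_sym; exact: IH.
Qed.

Lemma last_mrg (T : Type) (x0 : T) m A B : szok m A B -> last false m ->
  last x0 (mrg m A B) = last x0 A.
Proof.
elim: m A B x0 => [|b m IH] A B x0 [hA hB] //.
case: m IH hA hB => [|b' m] IH hA hB.
  case: b hA hB => // hA hB _.
  by case: A hA => // x [|] //.
move=> hl; change (is_true (last b' m)) in hl.
have pos : (0 < count id (b' :: m))%N.
  rewrite -has_count; apply/hasP; exists (last b' m) => //.
  exact: mem_last.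
case: b hA hB => hA hB.
  case: A hA => // x A hA.
  change (last x (mrg (b' :: m) A B) = last x A).
  rewrite IH //; split; move: hA hB => /=; lia.
case: B hB => // y B hB.
change (last y (mrg (b' :: m) A B) = last x0 A).
rewrite IH //; last by split; move: hA hB => /=; lia.
by case: A hA pos => //= hA pos; lia.
Qed.


Lemma abs_sg (x : int) (c : nat) : (1 <= absz x)%N -> absz (sgz x * c%:Z) = c.
Proof. lia. Qed.
Lemma sg_sg (x : int) (c : nat) : (1 <= absz x)%N -> (1 <= c)%N -> sgz (sgz x * c%:Z) = sgz x.
Proof. lia. Qed.

Lemma red_relabel (f : nat -> nat) s :
  (forall x, x \in s -> (1 <= absz x)%N) ->
  (forall x, x \in s -> (1 <= f (absz x))%N) ->
  {in s &, forall x y, (f (absz x) <= f (absz y))%N = (absz x <= absz y)%N} ->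
  red (map (fun x => sgz x * (f (absz x))%:Z) s) = red s.
Proof.
move=> h1 h2 h3; rewrite /red -map_comp; apply/eq_in_map => x xs /=.
rewrite sg_sg ?h1 ?h2 // count_map; congr (_ * Posz _).
apply: eq_in_count => y ys /=.
by rewrite !abs_sg ?h1 // h3.
Qed.

Lemma cnt_iota k t : (1 <= t <= k)%N -> cnt (iota 1 k) t = t.
Proof.
case: t => // t /= ht; have tk : (t < k)%N by lia.
have := cnt_sorted (iota_ltn_sorted 1 k); rewrite size_iota => h.
have := congr1 (fun s => nth 0%N s t) h; rewrite /=.
by rewrite (nth_map 0%N) ?size_iota // !nth_iota // add1n.
Qed.

Lemma red_id k s : signed_perm k s -> red s = s.
Proof.
move=> sp; rewrite /red; transitivity (map id s); last exact: map_id.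
apply/eq_in_map => x xs /=.
have ha := sp_abs sp xs.
have -> : count (fun y => (absz y <= absz x)%N) s = absz x.
  transitivity (cnt (map absz s) (absz x)); first by rewrite /cnt count_map.
  transitivity (cnt (iota 1 k) (absz x)); first exact: (elimT permP sp).
  exact: cnt_iota.
lia.
Qed.

Lemma red_inj u1 u2 : perm_eq (map absz u1) (map absz u2) ->
  (forall x, x \in u1 -> (1 <= absz x)%N) -> (forall x, x \in u2 -> (1 <= absz x)%N) ->
  red u1 = red u2 -> u1 = u2.
Proof.
move=> hp h1 h2 hr.
have sz : size u1 = size u2 by have := perm_size hp; rewrite !size_map.
apply: (eq_from_nth (x0 := 0) sz) => i hi.
have := congr1 (fun s => nth 0 s i) hr; rewrite /red !(nth_map 0) // -?sz //.
have m1 : nth 0 u1 i \in u1 by rewrite mem_nth.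
have m2 : nth 0 u2 i \in u2 by rewrite mem_nth -?sz.
have hx1 := h1 _ m1; have hx2 := h2 _ m2.
move: (nth 0 u1 i) (nth 0 u2 i) m1 m2 hx1 hx2 => x1 x2 m1 m2 hx1 hx2.
have a1 : absz x1 \in map absz u1 by apply: map_f.
have a2 : absz x2 \in map absz u1 by rewrite (perm_mem hp); apply: map_f.
have -> : count (fun y => (absz y <= absz x1)%N) u1 = cnt (map absz u1) (absz x1).
  by rewrite /cnt count_map.
have -> : count (fun y => (absz y <= absz x2)%N) u2 = cnt (map absz u1) (absz x2).
  transitivity (cnt (map absz u2) (absz x2)); first by rewrite /cnt count_map.
  by symmetry; exact: (elimT permP hp).
have c1 := cnt_ge1 a1; have c2 := cnt_ge1 a2.
have e := cnt_eq a1 a2.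
move: (cnt _ (absz x1)) (cnt _ (absz x2)) c1 c2 e => C1 C2 c1 c2 e.
have e' : C1 = C2 -> absz x1 = absz x2 by move/eqP; rewrite e => /eqP.
lia.
Qed.


Section Construct.
Variables (n k : nat) (sigma : seq int) (m : bitseq).
Hypotheses (hk : (1 <= k)%N) (kn : (k <= n)%N) (hD : DDelta k sigma)
  (hm : size m = n) (hc : count id m = k) (hl : last false m).

Local Notation N := (mask m (iota 1 n)).
Local Notation Fx := (mask (map negb m) (iota 1 n)).
Definition psi t := nth 0%N N t.-1.
Local Notation u := (map (fun x => sgz x * (psi (absz x))%:Z) sigma).
Local Notation v := (map Posz Fx).
Definition pic := mrg m u v.

Lemma spk : signed_perm k sigma.
Proof. by case/and3P: hD. Qed.
Lemma sz_sig : size sigma = k.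
Proof. exact: sp_size spk. Qed.
Lemma cneg : count negb m = (n - k)%N.
Proof. have h := count_predC id m; rewrite hm hc in h; change (count (predC id) m = (n - k)%N); lia. Qed.
Lemma szN : size N = k.
Proof. by rewrite size_mask ?size_iota. Qed.
Lemma szF : size Fx = (n - k)%N.
Proof. by rewrite size_mask ?size_map ?size_iota // count_map cneg. Qed.
Lemma N_sorted : sorted ltn N.
Proof. exact: subseq_sorted ltn_trans _ _ (mask_subseq _ _) (iota_ltn_sorted 1 n). Qed.
Lemma N_range t : t \in N -> (1 <= t <= n)%N.
Proof. by move/mem_mask; rewrite mem_iota; lia. Qed.
Lemma F_range t : t \in Fx -> (1 <= t <= n)%N.
Proof. by move/mem_mask; rewrite mem_iota; lia. Qed.
Lemma psi_mem t : (1 <= t <= k)%N -> psi t \in N.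
Proof. by case: t => // t /= h; rewrite /psi /= mem_nth // szN; lia. Qed.
Lemma psi_range t : (1 <= t <= k)%N -> (1 <= psi t <= n)%N.
Proof. by move/psi_mem/N_range. Qed.
Lemma psi_lt t1 t2 : (1 <= t1 <= k)%N -> (1 <= t2 <= k)%N -> (t1 < t2)%N -> (psi t1 < psi t2)%N.
Proof.
case: t1 => // t1; case: t2 => // t2 /= h1 h2 h.
apply: (sorted_ltn_nth ltn_trans 0%N N_sorted); rewrite ?inE ?szN //; lia.
Qed.
Lemma psi_le t1 t2 : (1 <= t1 <= k)%N -> (1 <= t2 <= k)%N -> (psi t1 <= psi t2)%N = (t1 <= t2)%N.
Proof.
move=> h1 h2; case: (ltngtP t1 t2) => h.
- by rewrite ltnW // psi_lt.
- by apply/negbTE; rewrite -ltnNge psi_lt.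
- by rewrite h leqnn.
Qed.
Lemma map_psi : map psi (iota 1 k) = N.
Proof.
rewrite -[RHS](mkseq_nth 0%N N) szN /mkseq -[1%N]/(1 + 0)%N iotaDl -map_comp.
by apply: eq_map => t /=; rewrite /psi add1n.
Qed.

Lemma sig_abs x : x \in sigma -> (1 <= absz x <= k)%N.
Proof. exact: sp_abs spk. Qed.

Lemma szok_uv : szok m u v.
Proof. by split; rewrite size_map ?sz_sig ?szF ?hc ?cneg. Qed.
Lemma szok_NF : szok m N Fx.
Proof. by split; rewrite ?szN ?szF ?hc ?cneg. Qed.
Lemma iota_mrg : iota 1 n = mrg m N Fx.
Proof. by rewrite mrg_mask // size_iota. Qed.
Lemma sz_pic : size pic = n.
Proof. by rewrite /pic size_mrg //; exact: szok_uv. Qed.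

Lemma posw_pic : posw pic = mrg m (zip u N) (zip v Fx).
Proof.
rewrite /posw sz_pic {1}iota_mrg /pic; exact: zip_mrg szok_uv szok_NF.
Qed.

Lemma nth_sig_nfx i : (i < k)%N -> nth 0 sigma i != i.+1%:Z.
Proof.
move=> hi; case/and3P: hD => _ _ /allP /(_ (nth (0,0%N) (posw sigma) i)).
by rewrite mem_nth ?size_posw ?sz_sig // nth_posw ?sz_sig //; apply.
Qed.

Lemma all_uN : all nfx (zip u N).
Proof.
apply/(all_nthP (0,0%N)) => i; rewrite size_zip size_map sz_sig szN minnn => hi.
rewrite nth_zip ?size_map ?sz_sig ?szN // /nfx /= (nth_map 0) ?sz_sig //.
have hx := sig_abs (mem_nth 0 (_ : (i < size sigma)%N)); rewrite sz_sig in hx.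
have {hx} hx := hx hi.
have hn := nth_sig_nfx hi.
have -> : nth 0%N N i = psi i.+1 by [].
have r1 := psi_range hx; have r2 := psi_range (_ : (1 <= i.+1 <= k)%N).
have l1 := psi_le hx (_ : (1 <= i.+1 <= k)%N).
have l2 := psi_le (_ : (1 <= i.+1 <= k)%N) hx.
have hi' : (1 <= i.+1 <= k)%N by lia.
move: (r2 hi') (l1 hi') (l2 hi') r1 hn hx; move: (nth 0 sigma i) => x.
move: (psi (absz x)) (psi i.+1) => a b *.
apply/eqP => e; lia.
Qed.

Lemma all_vF : all (predC nfx) (zip v Fx).
Proof.
apply/(all_nthP (0,0%N)) => i; rewrite size_zip size_map minnn => hi.
by rewrite nth_zip ?size_map // (nth_map 0%N) // /= /nfx negbK.
Qed.

Lemma szok_z : szok m (zip u N) (zip v Fx).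
Proof. by split; rewrite size_zip size_map ?sz_sig ?szN ?szF ?hc ?cneg ?minnn. Qed.

Lemma mask_pic : map nfx (posw pic) = m.
Proof. by rewrite posw_pic (map_mrg_pred szok_z all_uN all_vF). Qed.

Lemma filter_pic : filter nfx (posw pic) = zip u N.
Proof.
by rewrite posw_pic; have [-> _] := filter_mrg szok_z all_uN all_vF.
Qed.

Lemma dp_pic : dp pic = sigma.
Proof.
rewrite /dp (_ : filter _ _ = zip u N); last exact: filter_pic.
rewrite (_ : map _ (zip u N) = u); last first.
  by apply: (unzip1_zip (s := u) (t := N)); rewrite size_map sz_sig szN.
rewrite red_relabel; first exact: red_id spk.
- by move=> x /sig_abs; lia.
- by move=> x /sig_abs /psi_range; lia.
- by move=> x y /sig_abs hx /sig_abs hy; rewrite psi_le.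
Qed.

Lemma sp_pic : signed_perm n pic.
Proof.
rewrite /signed_perm /pic mrg_map.
apply: (@perm_trans _ (map absz u ++ map absz v)).
  by apply: perm_mrg; split; rewrite !size_map ?sz_sig ?szF ?hc ?cneg.
have e1 : map absz u = map psi (map absz sigma).
  rewrite -!map_comp; apply/eq_in_map => x /sig_abs hx /=; rewrite abs_sg //; lia.
have e2 : map absz v = Fx by rewrite -map_comp map_id.
rewrite e1 e2 [X in perm_eq _ X]iota_mrg.
apply: (@perm_trans _ (N ++ Fx)); last by rewrite perm_sym; apply: perm_mrg; exact: szok_NF.
rewrite perm_cat2r -map_psi; apply: perm_map; exact: spk.
Qed.

Lemma letter_pic : letter pic n = (psi (absz (letter sigma k)))%:Z.
Proof.
rewrite /letter -sz_pic nth_last /pic last_mrg //; last exact: szok_uv.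
have hk' : (k.-1 < size sigma)%N by rewrite sz_sig; case: (k) hk.
rewrite -nth_last size_map sz_sig (nth_map 0) -?sz_sig //.
have : 0 < letter sigma k by case/and3P: hD.
rewrite /letter sz_sig; move: (nth 0 sigma k.-1) => x hx.
  by rewrite gtr0_sgz // mul1r.
by rewrite sz_sig; case: (k) hk.
Qed.

Lemma letter_pic_range : 0 < letter pic n /\ letter pic n < n%:Z.
Proof.
rewrite letter_pic.
have hk1 : (k.-1 < size sigma)%N by rewrite sz_sig; case: (k) hk.
have hx := sig_abs (mem_nth 0 hk1).
have hpos : 0 < letter sigma k by case/and3P: hD.
have hne : letter sigma k != k%:Z.
  rewrite /letter; have := nth_sig_nfx (_ : (k.-1 < k)%N); rewrite prednK //.
  by apply; case: (k) hk.
have kk : (1 <= k <= k)%N by rewrite hk leqnn.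
have := psi_lt hx kk; have := psi_range hx; have := psi_range kk.
rewrite /letter in hpos hne *.
move: (nth 0 sigma k.-1) hx hpos hne => x hx hpos hne.
move: (psi (absz x)) (psi k) => a b *.
split; lia.
Qed.

End Construct.


Lemma sig_split k sigma : DDelta k sigma ->
  (size (subcL (posw sigma)) + size (excL (posw sigma)))%N = k /\ fixpL (posw sigma) = [::].
Proof.
case/and3P => sp _ /allP h.
have hf : fixpL (posw sigma) = [::].
  rewrite /fixpL; apply/eqP; rewrite -size_eq0 size_map size_filter -leqn0 leqNgt -has_count.
  by apply/hasP => -[q qL /= /eqP e]; move: (h q qL); rewrite /= e eqxx.
have := size_split (posw sigma); rewrite hf size_posw (sp_size sp) /=; split => //; lia.
Qed.

Lemma natE (j : nat) : exists j' : nat, j = j'.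
Proof. by exists j. Qed.

Lemma tsig_gam n k sigma x : DDelta k sigma -> (k <= n)%N ->
  x \in psibar n sigma -> x \notin gamma_word n sigma.
Proof.
move=> hD kn; have [hse _] := sig_split hD.
case/and3P: (hD) => sp _ /allP hnf.
rewrite psibarE => /mapP [[x0 j0] qL ->].
rewrite /gamma_word; apply/negP => /mapP [j]; rewrite mem_iota => hj.
change (s_num sigma) with (size (subcL (posw sigma))) in hj.
change (e_num sigma) with (size (excL (posw sigma))) in hj.
have := hnf _ qL; have := cS_le (posw sigma) x0; have := cE_le (posw sigma) x0.
have := cE_ge1 qL; have := cS_ge1 qL; rewrite /gL /=.
move: (cS _ _) (cE _ _) (cF _ _) hj hse => a b c.
move: (size (subcL _)) (size (excL _)) => s e.
have [j1 ->] := natE j0; have [j2 ->] := natE j.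
case: (ltgtP x0 j1%:Z) => h; lia.
Qed.

Section Main.
Variables (n k : nat) (sigma : seq int).
Hypotheses (hk : (1 <= k)%N) (kn : (k <= n)%N) (hD : DDelta k sigma).

Lemma Dl_sp pi : Delta_lt n sigma pi -> signed_perm n pi.
Proof. by case/and4P. Qed.
Lemma Dl_dp pi : Delta_lt n sigma pi -> dp pi = sigma.
Proof. by case/and4P => _ /eqP. Qed.

Lemma Dl_P pi : Delta_lt n sigma pi ->
  map (gL n (posw pi)) (filter nfx (posw pi)) = psibar n sigma.
Proof. by move=> h; rewrite -(Dl_dp h) (tsig (Dl_sp h)). Qed.
Lemma Dl_Q pi : Delta_lt n sigma pi ->
  map (gL n (posw pi)) (filter (predC nfx) (posw pi)) = gamma_word n sigma.
Proof. by move=> h; rewrite -(Dl_dp h) (gam (Dl_sp h)). Qed.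

Lemma Dl_mask pi : Delta_lt n sigma pi ->
  map nfx (posw pi) = map (fun x => x \notin gamma_word n sigma) (psibar n pi).
Proof.
move=> h; rewrite psibarE -map_comp; apply/eq_in_map => q qL /=.
case: (boolP (nfx q)) => hq.
  have : gL n (posw pi) q \in psibar n sigma.
    by rewrite -(Dl_P h); apply: map_f; rewrite mem_filter hq.
  by move/(tsig_gam hD kn) => ->.
have : gL n (posw pi) q \in gamma_word n sigma.
  by rewrite -(Dl_Q h); apply: map_f; rewrite mem_filter /= hq.
by move=> ->.
Qed.

Lemma snd_filter (a : pred (int * nat)) pi : signed_perm n pi ->
  map snd (filter a (posw pi)) = mask (map a (posw pi)) (iota 1 n).
Proof. by move=> sp; rewrite filter_mask map_mask unzip2_posw (sp_size sp). Qed.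

Lemma pi_decomp pi : signed_perm n pi ->
  pi = mrg (map nfx (posw pi)) (map fst (filter nfx (posw pi)))
           (map Posz (mask (map (predC nfx) (posw pi)) (iota 1 n))).
Proof.
move=> sp; rewrite -(snd_filter _ sp) -map_comp.
have -> : map (Posz \o snd) (filter (predC nfx) (posw pi)) = map fst (filter (predC nfx) (posw pi)).
  by apply/eq_in_map => q; rewrite mem_filter /= /nfx negbK => /andP [/eqP -> _].
by rewrite mrg_filter unzip1_posw.
Qed.

Lemma nlast pi : signed_perm n pi -> (0 < n)%N ->
  last (0, 0%N) (posw pi) = (letter pi n, n).
Proof.
move=> sp n0; rewrite -nth_last size_posw (sp_size sp) nth_posw ?(sp_size sp).
  by rewrite prednK.
by case: (n) n0.
Qed.

Lemma n0 : (0 < n)%N.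
Proof. exact: leq_trans hk kn. Qed.

Lemma size_tsig : size (psibar n sigma) = k.
Proof. by rewrite psibarE size_map size_posw; case/and3P: hD => sp _ _; rewrite (sp_size sp). Qed.

Lemma size_gam : size (gamma_word n sigma) = (n - k)%N.
Proof.
have [hse _] := sig_split hD.
rewrite /gamma_word size_map size_iota.
have -> : s_num sigma = size (subcL (posw sigma)) by [].
have -> : e_num sigma = size (excL (posw sigma)) by [].
lia.
Qed.

Lemma part1 pi : Delta_lt n sigma pi ->
  shuffle (psibar n sigma) (gamma_word n sigma) (psibar n pi) /\
  last 0 (psibar n pi) = letter (psibar n sigma) k.
Proof.
move=> h; have sp := Dl_sp h.
split.
  rewrite /shuffle -(Dl_P h) -(Dl_Q h) psibarE !map_subseq ?filter_subseq //=.
  rewrite perm_sym -map_cat; apply: perm_map; rewrite perm_filterC; exact: perm_refl.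
have hl := nlast sp n0.
case/and4P: (h) => _ _ hp1 hp2.
have [L' [x EL]] : exists L' x, posw pi = rcons L' x.
  case/lastP E : (posw pi) => [|L' x]; last by exists L', x.
  by move: (size_posw pi); rewrite E (sp_size sp) => e; move: n0; rewrite -e.
have ex : x = (letter pi n, n) by rewrite -hl EL last_rcons.
have nx : nfx x by rewrite ex /nfx /=; apply/eqP => e; move: hp2; rewrite e ltxx.
rewrite /letter -size_tsig nth_last -(Dl_P h) psibarE EL filter_rcons nx !map_rcons.
by rewrite !last_rcons.
Qed.

Lemma part2 : {in Delta_lt n sigma &, injective (psibar n)}.
Proof.
move=> p1 p2 h1 h2 e.
have sp1 := Dl_sp h1; have sp2 := Dl_sp h2.
have em : map nfx (posw p1) = map nfx (posw p2) by rewrite !Dl_mask // e.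
have ec : map (predC nfx) (posw p1) = map (predC nfx) (posw p2).
  transitivity (map negb (map nfx (posw p1))); first by rewrite -map_comp.
  by rewrite em -map_comp.
have eu : map fst (filter nfx (posw p1)) = map fst (filter nfx (posw p2)).
  apply: red_inj.
  - apply: (perm_trans (F1 sp1)); rewrite perm_sym; apply: (perm_trans (F1 sp2)).
    by rewrite !snd_filter // em.
  - move=> x /mapP [q]; rewrite mem_filter => /andP [_ /posw_mem [i hi ->]] -> /=.
    by have /andP [] := sp_abs sp1 (mem_nth 0 hi).
  - move=> x /mapP [q]; rewrite mem_filter => /andP [_ /posw_mem [i hi ->]] -> /=.
    by have /andP [] := sp_abs sp2 (mem_nth 0 hi).
  - by have := Dl_dp h1; have := Dl_dp h2; rewrite /dp => -> ->.
by rewrite (pi_decomp sp1) (pi_decomp sp2) em ec eu.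
Qed.

Lemma part3 alpha : shuffle (psibar n sigma) (gamma_word n sigma) alpha ->
  last 0 alpha = letter (psibar n sigma) k ->
  exists2 pi, Delta_lt n sigma pi & psibar n pi = alpha.
Proof.
set ts := psibar n sigma; set ga := gamma_word n sigma.
case/and3P => s1 s2 hp hlast.
pose p := fun x => x \notin ga.
have allp : all p ts by apply/allP => x xt; exact: tsig_gam hD kn xt.
have allnp : all (predC p) ga by apply/allP => x xg; rewrite /= /p negbK.
have cp1 : count p ts = size ts by apply/eqP; rewrite -all_count.
have cp2 : count (predC p) ga = size ga by apply/eqP; rewrite -all_count.
have cp3 : count p ga = 0%N.
  have : ~~ has p ga by rewrite -all_predC.
  by rewrite has_count -leqNgt leqn0 => /eqP.
have cp4 : count (predC p) ts = 0%N.
  have : ~~ has (predC p) ts by rewrite -all_predC; apply/allP => x /(allP allp) /= ->.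
  by rewrite has_count -leqNgt leqn0 => /eqP.
have c1 : count p alpha = size ts by rewrite (permP hp) count_cat cp1 cp3 addn0.
have c2 : count (predC p) alpha = size ga by rewrite (permP hp) count_cat cp2 cp4.
have f1 : filter p alpha = ts.
  have sub : subseq ts (filter p alpha) by rewrite subseq_filter allp.
  have E := (size_subseq_leqif sub).2; rewrite size_filter c1 eqxx in E.
  by rewrite (eqP (esym E)).
have f2 : filter (predC p) alpha = ga.
  have sub : subseq ga (filter (predC p) alpha) by rewrite subseq_filter allnp.
  have E := (size_subseq_leqif sub).2; rewrite size_filter c2 eqxx in E.
  by rewrite (eqP (esym E)).
have ea : mrg (map p alpha) ts ga = alpha.
  by have := mrg_filter p id alpha; rewrite !map_id f1 f2.
have sa : size alpha = n.
  by rewrite (perm_size hp) size_cat size_tsig size_gam; lia.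
have hm : size (map p alpha) = n by rewrite size_map.
have hc : count id (map p alpha) = k by rewrite count_map c1 size_tsig.
have hl : last false (map p alpha).
  rewrite -nth_last size_map (nth_map 0); last by rewrite sa; case: (n) n0.
  rewrite nth_last hlast /p; apply: tsig_gam hD kn _.
  by rewrite /letter mem_nth // size_tsig; case: (k) hk.
have hDl : Delta_lt n sigma (pic n sigma (map p alpha)).
  rewrite /Delta_lt (sp_pic hk kn hD hm hc hl) (dp_pic hk kn hD hm hc hl) eqxx /=.
  by have [-> ->] := letter_pic_range hk kn hD hm hc hl.
exists (pic n sigma (map p alpha)) => //.
rewrite psibarE -(mrg_filter nfx) (mask_pic hk kn hD hm hc hl) (Dl_P hDl) (Dl_Q hDl).
exact: ea.
Qed.

End Main.


Theorem lemma5p6 (n k : nat) (sigma : seq int) :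
  (1 <= k)%N -> (k <= n)%N -> DDelta k sigma ->
  let tsigma := psibar n sigma in
  let gamma := gamma_word n sigma in
  [/\ (forall pi, Delta_lt n sigma pi ->
         shuffle tsigma gamma (psibar n pi) /\
         last 0 (psibar n pi) = letter tsigma k),
      {in Delta_lt n sigma &, injective (psibar n)},
      (forall alpha, shuffle tsigma gamma alpha -> last 0 alpha = letter tsigma k ->
         exists2 pi, Delta_lt n sigma pi & psibar n pi = alpha)
    & (forall pi, Delta_lt n sigma pi -> fmaj pi = fmaj (psibar n pi))].
Proof.
move=> hk kn hD; rewrite /=; split.
- move=> pi h; exact (part1 hk kn hD h).
- exact: part2 kn hD.
- move=> alpha; exact (part3 hk kn hD (alpha:=alpha)).
- by move=> pi h; rewrite fmaj_psibar // (Dl_sp h).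
Qed.
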